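(* Let $d\geq 2$ and let $\mathcal K$ be the class of all compact convex subsets of $\mathbb R^d$ with positive Lebesgue measure. For every $n\geq 1$, $$\mathcal R_n(\mathcal K):=\inf_{\hat G_n}\sup_{K\in\mathcal K}\mathbb E_K\big[|K\triangle\hat G_n|\big]=+\infty,$$ where the infimum is over all set estimators $\hat G_n$ based on a sample $X_1,\ldots,X_n$.
   Context: $|\cdot|$ is Lebesgue measure, $\triangle$ symmetric difference, and $\mathbb E_K$ is expectation when $X_1,\ldots,X_n$ are i.i.d. uniform on $K$. *)

(* Defs.v *)
From HB Require Import structures.
From mathcomp Require Import all_boot all_order all_algebra.
From mathcomp Require Import all_classical all_reals all_analysis.
From mathcomp Require Import measurable_realfun.

Set Implicit Arguments.
Unset Strict Implicit.
Unset Printing Implicit Defensive.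

Import Order.TTheory GRing.Theory Num.Theory.
Import numFieldNormedType.Exports.

Local Open Scope classical_set_scope.
Local Open Scope ring_scope.

Definition borelType (T : topologicalType) := g_sigma_algebraType (@open T).

Section Defs.
Variable R : realType.

(* Iterated Lebesgue integration over the coordinates 0 .. k-1 of a point
   c : nat -> R (coordinate k-1 is integrated outermost). *)
Fixpoint iint (k : nat) (f : (nat -> R) -> \bar R) : \bar R :=
  match k with
  | 0 => f (fun _ => 0)
  | k'.+1 => (\int[@lebesgue_measure R]_x
                iint k' (fun c => f (fun i => if i == k' then x else c i)))%E
  end.

(* d-dimensional Lebesgue measure on R^d = 'rV[R]_d (iterated integral of
   the indicator; coincides with the product Lebesgue measure on Borel sets). *)
Definition lebd (d : nat) (A : set 'rV[R]_d) : \bar R :=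
  iint d (fun c => (\1_A (\row_(j < d) c (nat_of_ord j)))%:E).

(* Integral over the sample space (R^d)^n, a sample being the n x d matrix
   whose i-th row is X_(i+1). *)
Definition sample_int (n d : nat) (g : 'M[R]_(n, d) -> \bar R) : \bar R :=
  iint (n * d) (fun c => g (\matrix_(i < n, j < d) c (i * d + j)%N)).

(* E_K[g(X_1,...,X_n)] for X_1,...,X_n i.i.d. uniform on K. *)
Definition expect_unif (n d : nat) (K : set 'rV[R]_d)
    (g : 'M[R]_(n, d) -> \bar R) : \bar R :=
  (((fine (lebd K)) ^- n)%:E *
   sample_int (fun X => (\prod_(i < n) \1_K (row i X))%:E * g X))%E.

Definition symdiff (T : Type) (A B : set T) : set T := (A `\` B) `|` (B `\` A).

Definition Kclass (d : nat) : set (set 'rV[R]_d) :=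
  [set K : set 'rV[R]_d | [/\ compact K,
     @convex_set R 'rV[R]_d (K : set (convex_lmodType 'rV[R]_d))
     & (0 < lebd K)%E]].

(* Set estimators based on a sample of size n: maps from samples to Borel
   subsets of R^d whose loss |K /\ G(X)| is a measurable function of the
   sample for each K in the class (so that the expectation is meaningful). *)
Definition estimators (n d : nat) : set ('M[R]_(n, d) -> set 'rV[R]_d) :=
  [set G : 'M[R]_(n, d) -> set 'rV[R]_d |
     (forall X, @measurable _ (borelType 'rV[R]_d) (G X)) /\
     (forall K : set 'rV[R]_d, Kclass K ->
        @measurable_fun _ _ (borelType 'M[R]_(n, d)) (\bar R) setT
          (fun X : 'M[R]_(n, d) => lebd (symdiff K (G X))))].

Definition risk (n d : nat) (G : 'M[R]_(n, d) -> set 'rV[R]_d)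
    (K : set 'rV[R]_d) : \bar R :=
  expect_unif K (fun X => lebd (symdiff K (G X))).

Definition minimax_risk (n d : nat) : \bar R :=
  ereal_inf [set ereal_sup [set risk G K | K in @Kclass d] | G in @estimators n d].

End Defs.

(* Main.v *)
Require Import Defs.
From HB Require Import structures.
From mathcomp Require Import all_boot all_order all_algebra.
From mathcomp Require Import all_classical all_reals all_analysis.
From mathcomp Require Import measurable_realfun.
From mathcomp Require Import ring lra.
Set Implicit Arguments.
Unset Strict Implicit.
Unset Printing Implicit Defensive.
Import Order.TTheory GRing.Theory Num.Theory.
Import numFieldNormedType.Exports.
Local Open Scope classical_set_scope.
Local Open Scope ring_scope.


Lemma pm_sf d1 d2 (T1 : measurableType d1) (T2 : measurableType d2) (R : realType)
  (m1 : {sigma_finite_measure set T1 -> \bar R}) (m2 : {sigma_finite_measure set T2 -> \bar R}) :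
  sigma_finite setT (m1 \x m2)%E.
Proof.
have /sigma_finiteP[F [TF ndF Foo]] := sigma_finiteT m1.
have /sigma_finiteP[G [TG ndG Goo]] := sigma_finiteT m2.
exists (fun n => F n `*` G n).
 rewrite -setXTT TF TG predeqE => -[x y]; split.
    move=> [/= [n _ Fnx] [k _ Gky]]; exists (maxn n k) => //; split.
    - by move: x Fnx; exact/subsetPset/ndF/leq_maxl.
    - by move: y Gky; exact/subsetPset/ndG/leq_maxr.
  by move=> [n _ []/= ? ?]; split; exists n.
move=> k; have [? ?] := Foo k; have [? ?] := Goo k.
split; first exact: measurableX.
by rewrite product_measure1E// lte_mul_pinfty// ge0_fin_numE.
Qed.
Definition prodSF d1 d2 (T1 : measurableType d1) (T2 : measurableType d2) (R : realType)
  (m1 : {sigma_finite_measure set T1 -> \bar R}) (m2 : {sigma_finite_measure set T2 -> \bar R}) :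
  {sigma_finite_measure set (T1 * T2)%type -> \bar R} := HB.pack (m1 \x m2)%E (Measure_isSigmaFinite.Build _ _ _ (m1 \x m2)%E (pm_sf m1 m2)).

Section S.
Variable R : realType.
Fixpoint Sp (k : nat) : {d : measure_display & measurableType d} :=
  match k with
  | 0 => existT _ _ (measurableTypeR R : measurableType _)
  | k.+1 => existT _ _ ((measurableTypeR R * projT2 (Sp k))%type : measurableType _)
  end.
Definition ST k := projT2 (Sp k).
Definition L : {sigma_finite_measure set (measurableTypeR R) -> \bar R} := @lebesgue_measure R.
Fixpoint mu k : {sigma_finite_measure set (ST k) -> \bar R} :=
  match k return {sigma_finite_measure set (ST k) -> \bar R} with
  | 0 => [the {sigma_finite_measure set _ -> \bar R} of @dirac _ (measurableTypeR R) (0:R) R]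
  | k.+1 => prodSF L (mu k)
  end.
Fixpoint embed k : ST k -> nat -> R :=
  match k return ST k -> nat -> R with
  | 0 => fun _ _ => 0
  | k.+1 => fun s i => if i == k then s.1 else @embed k s.2 i
  end.
Local Open Scope ereal_scope.
Lemma iintE k (f : (nat -> R) -> \bar R) :
  measurable_fun setT (fun s : ST k => f (embed s)) -> (forall c, 0 <= f c) ->
  iint k f = \int[mu k]_s f (embed s).
Proof.
elim: k f => [|k IH] f mf f0.
  by rewrite /= integral_dirac // diracT mul1e.
rewrite /=.
transitivity (\int[L]_x \int[mu k]_y f (@embed k.+1 (x, y))).
  apply: eq_integral => x _; apply: IH => //.
  exact: (measurable_fun_pair2 x mf).
rewrite (@fubini_tonelli1 _ _ _ _ R L (mu k) (fun p => f (@embed k.+1 p))) //.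

Qed.
End S.


Section S2.
Variable R : realType.

Lemma meas_embed k t : measurable_fun setT (fun s : ST R k => embed s t).
Proof.
elim: k t => [|k IH] t /=; first exact: measurable_cst.
case: (t == k).
  exact: measurable_fst.
exact: (measurableT_comp (IH t) measurable_snd).
Qed.

Lemma meas_forall_fin d (T : measurableType d) (I : finType) (P : I -> set T) :
  (forall i, measurable (P i)) -> measurable [set s | forall i, P i s].
Proof.
move=> mP.
have -> : [set s | forall i, P i s] = ~` \bigcup_i ~` P i.
  apply/seteqP; split => [s Ps [i _ /(_ (Ps i))]//|s Hs i].
  by apply: contrapT => Ni; apply: Hs; exists i.
apply: measurableC; apply: countable_bigcupT_measurable.
  exact: countableP.
by move=> i; apply: measurableC.
Qed.


Definition box m p (q : 'M[rat]_(m,p)) (r : rat) : set 'M[R]_(m,p) :=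
  [set y | forall i j, `|y i j - ratr (q i j)| < ratr r].

Lemma meas_dist k t (c e : R) : measurable [set s : ST R k | `|embed s t - c| < e].
Proof.
have := @meas_embed k t measurableT _ (measurable_itv `](c - e), (c + e)[).
rewrite setTI; congr measurable; apply/seteqP; split => s /=;
  by rewrite in_itv /= distrC ltr_distlC.
Qed.

Lemma meas_mx k m p (idx : 'I_m -> 'I_p -> nat) :
  @measurable_fun _ _ (ST R k) (borelType 'M[R]_(m,p)) setT
    (fun s => \matrix_(i,j) embed s (idx i j)).
Proof.
pose phi := fun s : ST R k => (\matrix_(i,j) embed s (idx i j) : 'M[R]_(m,p)).
have := (@measurability _ _ (ST R k) (borelType 'M[R]_(m,p)) setT phi (@open 'M[R]_(m,p))).
move=> h; apply: h => //.

move=> _ [U oU <-]; rewrite setTI.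
have -> : phi @^-1` U = \bigcup_(qr : 'M[rat]_(m,p) * rat)
    [set s | (box qr.1 qr.2 `<=` U) /\ box qr.1 qr.2 (phi s)].
  apply/seteqP; split; last by move=> s [qr _ [sub b]]; exact: sub.
  move=> s /= Us.
  have : nbhs (phi s) U by apply: open_nbhs_nbhs; split.
  move/nbhs_ballP => [e /= e0 eU].
  have [r] : exists r : rat, ratr r \in `]0, e / 2[ by apply: rat_in_itvoo; rewrite divr_gt0.
  rewrite in_itv /= => /andP[r0 re].
  have : forall ij : 'I_m * 'I_p, exists qq : rat,
      ratr qq \in `](phi s ij.1 ij.2 - ratr r), (phi s ij.1 ij.2 + ratr r)[.
    by move=> ij; apply: rat_in_itvoo; rewrite ltrBlDr -addrA ltrDl addr_gt0.
  case/choice => f Hf.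
  exists (\matrix_(i,j) f (i,j), r) => //=; split.
    move=> y yb; apply: eU.
    split => // i j.
    rewrite /ball /=.
    have := yb i j; rewrite mxE distrC ltr_distlC => /andP[c1 c2].
    have := Hf (i,j); rewrite in_itv/= => /andP[a b].
    rewrite ltr_distlC; apply/andP; split; lra.
  move=> i j; rewrite mxE.
  have := Hf (i,j); rewrite in_itv /= => /andP[h1 h2].
  by rewrite ltr_distlC h1 h2.
apply: countable_bigcupT_measurable; first exact: countableP.
move=> [q r] /=; have [sub|nsub] := pselect (box q r `<=` U); last first.
  rewrite (_ : [set _ | _] = set0) //; apply/seteqP; split => // x [] //.
have -> : [set s | box q r `<=` U /\ box q r (phi s)] =
    [set s | forall ij : 'I_m * 'I_p, `|embed s (idx ij.1 ij.2) - ratr (q ij.1 ij.2)| < ratr r].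
  apply/seteqP; split => [s [_ b] ij|s b]; first by have := b ij.1 ij.2; rewrite mxE.
  by split => // i j; rewrite mxE; exact: (b (i, j)).
by apply: meas_forall_fin => ij; exact: meas_dist.
Qed.

End S2.


Section S3.
Variable R : realType.
Local Open Scope ereal_scope.

Fixpoint Box k (a : R) : set (ST R k) :=
  match k return set (ST R k) with
  | 0 => setT
  | k.+1 => (`[0%R, a]%classic : set R) `*` @Box k a
  end.
Arguments Box : clear implicits.

Lemma Box_meas k a : measurable (Box k a).
Proof.
elim: k => [|k IH] /=; first exact: measurableT.
apply: measurableX => //; exact: measurable_itv.
Qed.

Lemma mu_Box k a : (0 <= a)%R -> mu R k (Box k a) = (a ^+ k)%:E.
Proof.
move=> a0; elim: k => [|k IH] /=; first by rewrite diracT.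
rewrite product_measure1E //; last exact: Box_meas.
transitivity (a%:E * mu R k (Box k a)); last by rewrite IH -EFinM exprS.
congr (_ * _).
  apply: (etrans (lebesgue_measure_itv `[0%R, a])) => /=.
  rewrite lte_fin; have [_|aa] := ltP 0%R a; first by rewrite -EFinD oppr0 addr0.
  by congr EFin; apply/le_anti; rewrite aa a0.
Qed.


Lemma Box_embed k a s : Box k a s <-> (forall t, (t < k)%N -> (0 <= embed s t <= a)%R).
Proof.
elim: k s => [|k IH] s /=; first by split => // _ t.
case: s => x s' /=; split.
  move=> [xa /IH H] t; rewrite ltnS leq_eqVlt; case: eqP => [-> _|_ /= tk].
    by move: xa; rewrite /= in_itv.
  exact: H.
move=> H; split.
  by rewrite /= in_itv /=; have := H k (ltnSn k); rewrite eqxx.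
apply/IH => t tk; have := H t (ltnW (leq_trans tk (leqnn _))).
by rewrite (ltn_eqF tk).
Qed.

End S3.


Section S4.
Variable R : realType.
Local Open Scope ereal_scope.

Definition rowmap d (s : ST R d) : 'rV[R]_d := \row_(j < d) embed s j.
Definition Phi n d (s : ST R (n * d)) : 'M[R]_(n, d) := \matrix_(i < n, j < d) embed s (i * d + j)%N.

Lemma meas_rowmap d : @measurable_fun _ _ (ST R d) (borelType 'rV[R]_d) setT (@rowmap d).
Proof. exact: (@meas_mx R d 1 d (fun _ j => j)). Qed.

Lemma meas_Phi n d : @measurable_fun _ _ (ST R (n * d)) (borelType 'M[R]_(n, d)) setT (@Phi n d).
Proof. exact: (@meas_mx R (n * d) n d (fun i j => i * d + j)%N). Qed.

Lemma lebdE d (A : set 'rV[R]_d) : @measurable _ (borelType 'rV[R]_d) A ->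
  lebd A = mu R d (@rowmap d @^-1` A).
Proof.
move=> mA.
have mpre : measurable (@rowmap d @^-1` A).
  by have := meas_rowmap measurableT mA; rewrite setTI.
rewrite /lebd (@iintE R d (fun c => (\1_A (\row_(j < d) c j))%:E)); last 2 first.
- apply/measurable_EFinP.
  rewrite (_ : (fun x => _) = \1_(@rowmap d @^-1` A)); first exact: measurable_indic.
  by apply/funext => s; rewrite /indic /=; congr (_ %:R); apply/idP/idP => /set_mem h; apply/mem_set.
- by move=> c; rewrite lee_fin indicE; case: (_ \in _).
rewrite (_ : (fun s => _) = (fun s => (\1_(@rowmap d @^-1` A) s)%:E)).
  by rewrite integral_indic // setIT.
by apply/funext => s; rewrite /indic /=; congr ((_ %:R)%:E); apply/idP/idP => /set_mem h; apply/mem_set.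
Qed.

Lemma sample_intE n d (g : 'M[R]_(n, d) -> \bar R) :
  @measurable_fun _ _ (borelType 'M[R]_(n, d)) (\bar R) setT g ->
  (forall X, 0 <= g X) ->
  sample_int g = \int[mu R (n * d)]_s g (@Phi n d s).
Proof.
move=> mg g0; rewrite /sample_int iintE //.
exact: (measurableT_comp mg (@meas_Phi n d)).
Qed.

End S4.

Unset Implicit Arguments.
Set Strict Implicit.


Section S5.
Variable R : realType.

Definition cube d (a : R) : set 'rV[R]_d :=
  [set v | forall i, (`[0%R, a]%classic : set R) (v ord0 i)].
Arguments cube : clear implicits.

Lemma cube_compact d a : compact (cube d a).
Proof.
apply: (@rV_compact _ _ (fun=> `[0%R, a]%classic)) => _; exact: segment_compact.
Qed.

Lemma cube_closed d a : closed (cube d a).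
Proof. apply: compact_closed => //; exact: cube_compact. Qed.

Lemma cube_meas d a : @measurable _ (borelType 'rV[R]_d) (cube d a).
Proof.
rewrite -[cube d a]setCK; apply: measurableC; apply: sub_sigma_algebra.
exact: closed_openC (cube_closed d a).
Qed.

Lemma cube_pre d a : @rowmap R d @^-1` cube d a = @Box R d a.
Proof.
apply/seteqP; split => s /=.
  move=> H; apply/Box_embed => t td.
  by have := H (Ordinal td); rewrite /rowmap mxE /= in_itv.
move=> /Box_embed H i; rewrite /rowmap mxE /= in_itv; exact: H.
Qed.

Lemma lebd_cube d a : (0 <= a)%R -> lebd (cube d a) = (a ^+ d)%:E.
Proof. by move=> a0; rewrite lebdE ?cube_pre ?mu_Box //; exact: cube_meas. Qed.


End S5.
Section S6.
Variable R : realType.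
Lemma cube_convex d a : @convex_set R 'rV[R]_d (cube R d a : set (convex_lmodType 'rV[R]_d)).
Proof.
move=> x y l /set_mem xK /set_mem yK; apply/mem_set => i.
have := xK i; have := yK i.
rewrite /= !in_itv /= => /andP[y0 ya] /andP[x0 xa].
rewrite /conv /= !mxE.
have p0 : 0 <= l%:num by rewrite ge0.
have p1 : l%:num <= 1 by rewrite le1.
move: p0 p1; set p := l%:num => p0 p1.
have p1' : 0 <= 1 - p by rewrite subr_ge0.
have h1 := mulr_ge0 p0 x0; have h2 := mulr_ge0 p1' y0.
have h3 : p * x ord0 i <= p * a by rewrite ler_wpM2l.
have h4 : (1 - p) * y ord0 i <= (1 - p) * a by rewrite ler_wpM2l.
rewrite /unstable.onem; apply/andP; split; lra.
Qed.

Lemma cube_K d a : (0 < a)%R -> @Kclass R d (cube R d a).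
Proof.
move=> a0; split; first exact: cube_compact.
  exact: cube_convex.
by rewrite lebd_cube ?ltW // lte_fin exprn_gt0.
Qed.
End S6.


Section S7.
Variable R : realType.
Local Open Scope ereal_scope.

Lemma Box_sub k (a b : R) : (a <= b)%R -> @Box R k a `<=` @Box R k b.
Proof.
move=> ab s /Box_embed H; apply/Box_embed => t tk.
have /andP[h1 h2] := H t tk; rewrite h1 /=; exact: le_trans ab.
Qed.

Lemma meas_symdiff d (K A : set 'rV[R]_d) :
  @measurable _ (borelType 'rV[R]_d) K -> @measurable _ (borelType 'rV[R]_d) A ->
  @measurable _ (borelType 'rV[R]_d) (symdiff K A).
Proof. by move=> mK mA; apply: measurableU; apply: measurableD. Qed.

Lemma key_lebd d (a : R) (A : set 'rV[R]_d) :
  @measurable _ (borelType 'rV[R]_d) A -> (0 < a)%R ->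
  (((2 * a) ^+ d - a ^+ d)%R)%:E <=
    lebd (symdiff (cube R d a) A) + lebd (symdiff (cube R d (2 * a)) A).
Proof.
move=> mA a0.
have a2 : (a <= 2 * a)%R by lra.
rewrite !lebdE; try by apply: meas_symdiff => //; exact: cube_meas.
have mP : measurable (@rowmap R d @^-1` A).
  by have := meas_rowmap measurableT mA; rewrite setTI.
have pre K : @rowmap R d @^-1` symdiff K A = symdiff (@rowmap R d @^-1` K) (@rowmap R d @^-1` A).
  by [].
rewrite !pre !cube_pre.
set B1 := @Box R d a; set B2 := @Box R d (2 * a); set P := _ @^-1` A.
have mB1 : measurable B1 by exact: Box_meas.
have mB2 : measurable B2 by exact: Box_meas.
have -> : (((2 * a) ^+ d - a ^+ d)%R)%:E = mu R d (B2 `\` B1).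
  have a2' : (0 <= 2 * a)%R by lra.
  rewrite measureD //; last first.
    apply: (le_lt_trans _ (ltry ((2 * a) ^+ d)%R)).
    rewrite le_eqVlt; apply/orP; left; apply/eqP; exact: mu_Box.
  rewrite setIidr; last exact: Box_sub.
  transitivity (((2 * a) ^+ d)%:E - (a ^+ d)%:E)%E; first by rewrite EFinB.
  by congr (_ - _); apply/esym; apply: mu_Box => //; exact: ltW.
apply: le_trans (measureU2 _ _ _); last 2 first.
- by apply: measurableU; apply: measurableD.
- by apply: measurableU; apply: measurableD.
apply: le_measure; rewrite ?inE.
- exact: measurableD.
- by apply: measurableU; apply: measurableU; apply: measurableD.
move=> s [s2 s1].
have [sP|sP] := pselect (P s).
  by left; right.
by right; left.
Qed.
End S7.


Section S8.
Variable R : realType.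
Local Open Scope ereal_scope.

Lemma iint_ge0 k (f : (nat -> R) -> \bar R) : (forall c, 0 <= f c) -> 0 <= iint k f.
Proof.
elim: k f => [|k IH] f f0 /=; first exact: f0.
by apply: integral_ge0 => x _; apply: IH.
Qed.

Lemma lebd_ge0 d (A : set 'rV[R]_d) : 0 <= lebd A.
Proof. by apply: iint_ge0 => c; rewrite lee_fin indicE; case: (_ \in _). Qed.

Lemma prod_cube n d (a : R) (s : ST R (n * d)) : (0 < d)%N ->
  (\prod_(i < n) (\1_(cube R d a) (row i (@Phi R n d s)) : R))%R = (\1_(@Box R (n * d) a) s : R).
Proof.
move=> d0.
have [sB|sB] := pselect (@Box R (n * d) a s).
  rewrite indicE mem_set // big1 // => i _; rewrite indicE mem_set // => j.
  rewrite /Phi !mxE /= in_itv /=.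
  have /Box_embed := sB; apply.
  have := ltn_ord i; have := ltn_ord j; move: (nat_of_ord i) (nat_of_ord j) => x y.
  move=> yd xn; apply: (@leq_trans (x * d + d)); first by rewrite ltn_add2l.
  by rewrite -mulSnr leq_mul2r xn orbT.
rewrite indicE memNset //.
have [i Ni] : exists i : 'I_n, ~ cube R d a (row i (@Phi R n d s)).
  apply: contrapT => H; apply: sB; apply/Box_embed => t tn.
  have tdn : (t %/ d < n)%N by rewrite ltn_divLR.
  have tdd : (t %% d < d)%N by rewrite ltn_mod.
  have : cube R d a (row (Ordinal tdn) (@Phi R n d s)).
    by apply: contrapT => C; apply: H; exists (Ordinal tdn).
  move=> /(_ (Ordinal tdd)); rewrite /Phi !mxE /= in_itv /=.
  by rewrite -divn_eq.
by rewrite (bigD1 i) //= indicE memNset // mul0r.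
Qed.


Lemma risk_cube n d (G : 'M[R]_(n, d) -> set 'rV[R]_d) (hG : estimators G) (a : R) :
  (0 < a)%R -> (0 < d)%N ->
  risk G (cube R d a) = (((a ^+ d) ^- n)%R)%:E *
    \int[mu R (n * d)]_s ((\1_(@Box R (n * d) a) s)%:E *
       lebd (symdiff (cube R d a) (G (@Phi R n d s)))).
Proof.
move=> a0 d0; rewrite /risk /expect_unif lebd_cube ?ltW //=.
congr (_ * _).
have eqf : (fun s : ST R (n * d) => (\prod_(i < n) (\1_(cube R d a) (row i (@Phi R n d s)) : R))%:E *
       lebd (symdiff (cube R d a) (G (@Phi R n d s)))) =
    (fun s => (\1_(@Box R (n * d) a) s)%:E * lebd (symdiff (cube R d a) (G (@Phi R n d s)))).
  by apply/funext => s; rewrite prod_cube.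
rewrite /sample_int iintE.
- by rewrite -/(Phi _) eqf.
- rewrite -/(Phi _) eqf; apply: emeasurable_funM.
    by apply/measurable_EFinP; apply: measurable_indic; exact: Box_meas.
  have h := proj2 hG (cube R d a) (@cube_K R d a a0).
  exact: (measurableT_comp h (@meas_Phi R n d)).
- move=> c; apply: mule_ge0; last exact: lebd_ge0.
  by rewrite lee_fin; apply: prodr_ge0 => i _; rewrite indicE; case: (_ \in _).
Qed.

End S8.


Section S9.
Variable R : realType.
Local Open Scope ereal_scope.

Lemma lecam n d (G : 'M[R]_(n, d) -> set 'rV[R]_d) (hG : estimators G) (a : R) :
  (0 < a)%R -> (0 < d)%N ->
  ((((2 * a) ^+ d) ^- n * ((2 * a) ^+ d - a ^+ d) * a ^+ (n * d))%R)%:E <=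
    risk G (cube R d a) + risk G (cube R d (2 * a)).
Proof.
move=> a0 d0.
have a20 : (0 < 2 * a)%R by lra.
rewrite (@risk_cube R n d G hG a a0 d0) (@risk_cube R n d G hG _ a20 d0).
set N := (n * d)%N.
set B1 := @Box R N a; set B2 := @Box R N (2 * a)%R.
set h1 := fun s => lebd (symdiff (cube R d a) (G (@Phi R n d s))).
set h2 := fun s => lebd (symdiff (cube R d (2 * a)) (G (@Phi R n d s))).
have mh (b : R) : (0 < b)%R -> measurable_fun setT (fun s => lebd (symdiff (cube R d b) (G (@Phi R n d s)))).
  move=> b0; have h := proj2 hG (cube R d b) (@cube_K R d b b0).
  exact: (measurableT_comp h (@meas_Phi R n d)).
have mh1 : measurable_fun setT h1 by exact: mh.
have mh2 : measurable_fun setT h2 by exact: mh.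
have mI (B : set (ST R N)) (h : ST R N -> \bar R) : measurable B -> measurable_fun setT h ->
    measurable_fun setT (fun s => (\1_B s)%:E * h s).
  move=> mB mhh; apply: emeasurable_funM => //.
  by apply/measurable_EFinP; apply: measurable_indic.
have i0 (B : set (ST R N)) s : 0 <= (\1_B s)%:E by rewrite lee_fin indicE; case: (_ \in _).
have h0 (h : ST R N -> \bar R) (B : set (ST R N)) : (forall s, 0 <= h s) ->
    0 <= \int[mu R N]_s ((\1_B s)%:E * h s).
  by move=> hp; apply: integral_ge0 => s _; apply: mule_ge0.
have h10 s : 0 <= h1 s by exact: lebd_ge0.
have h20 s : 0 <= h2 s by exact: lebd_ge0.
set V1 := (a ^+ d)%R; set V2 := ((2 * a) ^+ d)%R.
have V10 : (0 < V1)%R by rewrite exprn_gt0.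
have V12 : (V1 <= V2)%R by rewrite lerXn2r ?nnegrE; lra.
have V20 : (0 < V2)%R by rewrite exprn_gt0.
have V12n : (V2 ^- n <= V1 ^- n)%R.
  rewrite lef_pV2 ?posrE ?exprn_gt0 //.
  by rewrite lerXn2r // nnegrE ltW.
have sa : (V2 ^- n)%:E * \int[mu R N]_s ((\1_B1 s)%:E * h1 s) <=
          (V1 ^- n)%:E * \int[mu R N]_s ((\1_B1 s)%:E * h1 s).
  by apply: lee_wpmul2r; [exact: h0|rewrite lee_fin].
have sb : (V2 ^- n)%:E * \int[mu R N]_s ((\1_B1 s)%:E * h2 s) <=
          (V2 ^- n)%:E * \int[mu R N]_s ((\1_B2 s)%:E * h2 s).
  apply: lee_wpmul2l; first by rewrite lee_fin invr_ge0 exprn_ge0 // ltW.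
  apply: ge0_le_integral => //.
  - by move=> s _; apply: mule_ge0.
  - by apply: mI => //; exact: Box_meas.
  - by apply: mI => //; exact: Box_meas.
  move=> s _; apply: lee_wpmul2r => //.
  rewrite lee_fin !indicE; have [sB1|] := boolP (s \in B1); last by case: (_ \in _).
  rewrite mem_set //; apply: (@Box_sub R N a (2 * a)%R) (set_mem sB1); lra.
set C := ((2 * a) ^+ d - a ^+ d)%R.
have mB1 : measurable B1 by exact: Box_meas.
have sc : \int[mu R N]_s ((\1_B1 s)%:E * h1 s) + \int[mu R N]_s ((\1_B1 s)%:E * h2 s) =
          \int[mu R N]_s ((\1_B1 s)%:E * (h1 s + h2 s)).
  rewrite -ge0_integralD //.
  - by apply: eq_integral => s _; rewrite ge0_muleDr.
  - by move=> s _; apply: mule_ge0.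
  - exact: mI.
  - by move=> s _; apply: mule_ge0.
  - exact: mI.
have sd : ((C * a ^+ N)%R)%:E <= \int[mu R N]_s ((\1_B1 s)%:E * (h1 s + h2 s)).
  have -> : ((C * a ^+ N)%R)%:E = \int[mu R N]_s ((\1_B1 s)%:E * C%:E).
    under eq_integral do rewrite muleC.
    rewrite ge0_integralZl_EFin //; last 2 first.
    - by apply/measurable_EFinP; apply: measurable_indic.
    - rewrite /C subr_ge0 lerXn2r ?nnegrE; lra.
    rewrite integral_indic // setIT EFinM; congr (_ * _).
    by apply/esym; apply: mu_Box; exact: ltW.
  apply: ge0_le_integral => //.
  - move=> s _; apply: mule_ge0 => //; rewrite lee_fin /C subr_ge0 lerXn2r ?nnegrE; lra.
  - by apply: mI => //; exact: measurable_cst.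
  - by apply: mI => //; apply: emeasurable_funD.
  move=> s _; apply: lee_wpmul2l => //.
  apply: key_lebd => //; exact: (proj1 hG).
apply: le_trans (leeD sa sb).
rewrite -ge0_muleDr; last 2 first.
- exact: h0.
- exact: h0.
rewrite sc -mulrA EFinM; apply: lee_wpmul2l => //.
by rewrite lee_fin invr_ge0 exprn_ge0 // ltW.
Qed.

End S9.


Section S10.
Variable R : realType.
Local Open Scope ereal_scope.

Lemma big_risk n d (G : 'M[R]_(n, d) -> set 'rV[R]_d) (hG : estimators G) (M : R) :
  (0 < d)%N -> exists K, Kclass K /\ M%:E <= risk G K.
Proof.
move=> d0.
set w := (2 ^+ d : R)%R; set W := (w ^+ n)%R.
have w2 : (2 <= w)%R.
  rewrite /w -(prednK d0) exprS; have : (1 <= 2 ^+ d.-1 :> R)%R by apply: exprn_ege1; lra.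
  lra.
have W0 : (0 < W)%R by rewrite /W exprn_gt0 //; lra.
set a := Num.max 1%R (2 * W * M)%R.
have a1 : (1 <= a)%R by rewrite /a le_max lexx.
have aM : (2 * W * M <= a)%R by rewrite /a le_max lexx orbT.
have a0 : (0 < a)%R by lra.
set u := (a ^+ d)%R.
have ua : (a <= u)%R.
  rewrite /u -(prednK d0) exprS; have : (1 <= a ^+ d.-1)%R by apply: exprn_ege1.
  nra.
have H := @lecam R n d G hG a a0 d0.
set X := (_ * _ * _)%R in H.
have HX : (2 * M <= X)%R.
  have eX : X = (W ^-1 * ((w - 1) * u))%R.
    rewrite /X exprMn -/w -/u mulnC exprM -/u exprMn -/W.
    have U0 : (u ^+ n != 0)%R by rewrite expf_neq0 // gt_eqF // (lt_le_trans a0).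
    field; apply/andP; split => //; exact: lt0r_neq0.
  rewrite eX [X in (_ <= X)%R]mulrC ler_pdivlMr //.
  have w2' : (0 <= w - 2)%R by rewrite subr_ge0.
  have h := mulr_ge0 w2' (ltW (lt_le_trans a0 ua)).
  nra.
have [r1|r1] := leP M%:E (risk G (cube R d a)).
  by exists (cube R d a); split => //; exact: cube_K.
have [r2|r2] := leP M%:E (risk G (cube R d (2 * a))).
  by exists (cube R d (2 * a)); split => //; apply: cube_K; lra.
have : (M%:E + M%:E <= X%:E) by rewrite -EFinD lee_fin; lra.
move=> h; have := lt_le_trans (lt_le_trans (lteD r1 r2) h) H.
by rewrite ltxx.
Qed.

End S10.

Theorem theorem3 (R : realType) (d n : nat) :
  (2 <= d)%N -> (1 <= n)%N -> minimax_risk R n d = +oo%E.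
Proof.
move=> d2 n1; rewrite /minimax_risk; apply/ereal_inf_pinfty => _ [G hG <-] /=.
have d0 : (0 < d)%N by apply: leq_trans d2.
have key (M : R) : (M%:E <= ereal_sup [set risk G K | K in @Kclass R d])%E.
  have [K [KK HK]] := @big_risk R n d G hG M d0.
  by apply: le_trans HK _; apply: ereal_sup_ubound; exists K.
case E : (ereal_sup _) => [r| |] //.
  by have := key (r + 1)%R; rewrite E lee_fin gerDl ler10.
by have := key 0%R; rewrite E leeNy_eq.
Qed.
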